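(* Let $q(z)$ be a mixing distribution and $q_\phi(x|z)$ a conditional density on $\mathbb{R}^d$ with tractable score $s_{q_\phi(\cdot|z)}(x)=\nabla_x\log q_\phi(x|z)$, and let $q_\phi(x)=\int q_\phi(x|z)q(z)\,\mathrm{d}z$, $q_\phi(x,z)=q_\phi(x|z)q(z)$. Let $p$ be a target density on $\mathbb{R}^d$ with score $s_p=\nabla\log p$, and $k$ a continuous positive semi-definite kernel on $\mathbb{R}^d$ with RKHS $\mathcal{H}_0$, $\mathcal{H}=\mathcal{H}_0^{\otimes d}$. Then the maximizer $f^*(x)=\mathbb{E}_{q_\phi(y)}k(x,y)[s_p(y)-s_{q_\phi}(y)]$ of $f\mapsto \mathbb{E}_{q_\phi(x)}[2f(x)^\top(s_p(x)-s_{q_\phi}(x))]-\|f\|_{\mathcal{H}}^2$ over $\mathcal{H}$ can be rewritten as $$f^*(x)=\mathbb{E}_{q_\phi(y,z)}\,k(x,y)\big[s_p(y)-s_{q_\phi(\cdot|z)}(y)\big],$$ and $$\mathrm{KSD}(q_\phi\|p)^2=\mathbb{E}_{q_\phi(x,z),\,q_\phi(x',z')}\Big[k(x,x')\big\langle s_p(x)-s_{q_\phi(\cdot|z)}(x),\ s_p(x')-s_{q_\phi(\cdot|z')}(x')\big\rangle\Big],$$ where $(x,z)$ and $(x',z')$ are independent draws from $q_\phi(x,z)$.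
   Context: $s_{q_\phi}=\nabla\log q_\phi$ is the (generally intractable) marginal score. The kernel Stein discrepancy is $\mathrm{KSD}(q\|p)^2=\mathbb{E}_{x,y\sim q}\big[(s_p(x)-s_q(x))^\top k(x,y)(s_p(y)-s_q(y))\big]$. *)

(* Defs.v *)
From HB Require Import structures.
From mathcomp Require Import all_boot all_order all_algebra.
From mathcomp Require Import all_classical all_reals all_analysis.
Set Implicit Arguments. Unset Strict Implicit. Unset Printing Implicit Defensive.
Import Order.TTheory GRing.Theory Num.Theory.
Import numFieldNormedType.Exports.
Local Open Scope classical_set_scope.
Local Open Scope ring_scope.

Definition mx_display : measure_display -> measure_display.
Proof. exact. Qed.

Section measurable_mx.
Context {d} {T : sigmaRingType d} (n : nat).
Let coor : 'I_n -> 'rV[T]_n -> T := fun i A => A ord0 i.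
Let s0 : g_sigma_preimage coor set0.
Proof. exact: sigma_algebra0. Qed.
Let sC A : g_sigma_preimage coor A -> g_sigma_preimage coor (~` A).
Proof. exact: sigma_algebraC. Qed.
Let sU (F : _^nat) : (forall i, g_sigma_preimage coor (F i)) ->
  g_sigma_preimage coor (\bigcup_i (F i)).
Proof. exact: sigma_algebra_bigcup. Qed.
HB.instance Definition _ := @isMeasurable.Build (mx_display d)
  'rV[T]_n (g_sigma_preimage coor) s0 sC sU.
End measurable_mx.


(* R^d is modelled as row vectors 'rV[R]_d, with the product (= Borel)      *)
(* sigma-algebra generated by the coordinates (instance above).             *)
Section ksd_defs.
Context {R : realType} {d : nat}.
Local Notation V := 'rV[R]_d.

Definition ei (i : 'I_d) : V := delta_mx ord0 i.

Definition is_lebesgue (leb : {sigma_finite_measure set V -> \bar R}) : Prop :=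
  forall a b : V, (forall i, a ord0 i <= b ord0 i) ->
    leb [set x : V | forall i, a ord0 i <= x ord0 i <= b ord0 i] =
    (\prod_(i < d) (b ord0 i - a ord0 i))%:E.

Definition dotv (u v : V) : R := \sum_(i < d) u ord0 i * v ord0 i.

Definition score (f : V -> R) (x : V) : V :=
  \row_(i < d) 'D_(ei i) (fun y => ln (f y)) x.

Definition psd_kernel (k : V -> V -> R) : Prop :=
  (forall x y, k x y = k y x) /\
  (forall (n : nat) (xs : 'I_n -> V) (c : 'I_n -> R),
     0 <= \sum_(a < n) \sum_(b < n) c a * c b * k (xs a) (xs b)).

Definition marginal {dZ} {Z : measurableType dZ}
  (Q : {measure set Z -> \bar R}) (qc : V -> Z -> R) (x : V) : R :=
  \int[Q]_z qc x z.

Definition KSD2 (leb : {sigma_finite_measure set V -> \bar R}) (k : V -> V -> R)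
  (p q : V -> R) : R :=
  \int[(leb \x leb)%E]_w
     (k w.1 w.2 * dotv (score p w.1 - score q w.1) (score p w.2 - score q w.2)
        * q w.1 * q w.2).

Definition fstar (leb : {sigma_finite_measure set V -> \bar R}) (k : V -> V -> R)
  (p q : V -> R) (x : V) : V :=
  \row_(i < d) \int[leb]_y (k x y * (score p y - score q y) ord0 i * q y).

End ksd_defs.

(* Main.v *)
Require Import Defs.
From HB Require Import structures.
From mathcomp Require Import all_boot all_order all_algebra.
From mathcomp Require Import all_classical all_reals all_analysis.
From mathcomp Require Import measurable_realfun.
From mathcomp Require Import ring lra.
Import Order.TTheory GRing.Theory Num.Theory.
Import numFieldNormedType.Exports.
Local Open Scope classical_set_scope.
Local Open Scope ring_scope.


Section pm.
Context d1 d2 (T1 : measurableType d1) (T2 : measurableType d2) (R : realType)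
 (m1 : {sigma_finite_measure set T1 -> \bar R}) (m2 : {sigma_finite_measure set T2 -> \bar R}).
Definition pm := (m1 \x m2)%E.
HB.instance Definition _ := Measure.on pm.
Lemma pm_sf : sigma_finite setT pm.
Proof.
have /sigma_finiteP[F [TF ndF Foo]] := sigma_finiteT m1.
have /sigma_finiteP[G [TG ndG Goo]] := sigma_finiteT m2.
exists (fun n => F n `*` G n).
 rewrite -setXTT TF TG predeqE => -[x y]; split.
    move=> [/= [n _ Fnx] [k _ Gky]]; exists (maxn n k) => //; split.
    - by move: x Fnx; exact/subsetPset/ndF/leq_maxl.
    - by move: y Gky; exact/subsetPset/ndG/leq_maxr.
  by move=> [n _ []/= ? ?]; split; exists n.
move=> k; have [? ?] := Foo k; have [? ?] := Goo k.
split; first exact: measurableX.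
by rewrite /pm product_measure1E// lte_mul_pinfty// ge0_fin_numE.
Qed.
HB.instance Definition _ := Measure_isSigmaFinite.Build _ _ _ pm pm_sf.
End pm.
Arguments pm {d1 d2 T1 T2 R} m1 m2.

Notation PM m1 m2 := (SigmaFiniteMeasure.clone _ _ _ (pm m1 m2) _).

Section S.
Context {R : realType} {d : nat}.
Local Notation V := 'rV[R]_d.

Lemma line_fun (f : V -> R) (x v : V) (t : R) :
  (fun h : R => h^-1 *: ((fun s : R => f (x + s *: v)) (h *: 1 + t) - (fun s : R => f (x + s *: v)) t))
  = (fun h : R => h^-1 *: (f (h *: v + (x + t *: v)) - f (x + t *: v))).
Proof.
apply/funext => h /=. congr (_ *: (f _ - _)).
by rewrite scalerDl [h *: 1]mulr1 addrCA.
Qed.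

Lemma D_line (f : V -> R) (x v : V) (t : R) :
  'D_1 (fun s : R => f (x + s *: v)) t = 'D_v f (x + t *: v).
Proof. by rewrite /derive /= line_fun. Qed.

Lemma derivable_line (f : V -> R) (x v : V) (t : R) :
  derivable (fun s : R => f (x + s *: v)) t 1 <-> derivable f (x + t *: v) v.
Proof. by rewrite /derivable line_fun. Qed.

Lemma x0v (x v : V) : x + (0:R) *: v = x.
Proof. by rewrite scale0r addr0. Qed.

Lemma score_mul (f : V -> R) x i : 0 < f x -> derivable f x (ei i) ->
  score f x ord0 i * f x = 'D_(ei i) f x.
Proof.
move=> fx0 df.
rewrite /score mxE.
rewrite -[in 'D_(ei i) (fun y => ln (f y)) x](x0v x (ei i)).
rewrite -(D_line (fun y => ln (f y))) -derive1E.
have dg : derivable (fun s : R => f (x + s *: ei i)) 0 1.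
  by apply/derivable_line; rewrite x0v.
have -> : (fun s : R => ln (f (x + s *: ei i))) = (@ln R) \o (fun s : R => f (x + s *: ei i)) by [].
rewrite derive1_comp //; last first.
  by rewrite /= x0v; case: (is_derive1_ln fx0).
have Hd := is_derive1_ln fx0.
rewrite /= x0v derive1E (_ : 'D_1 (@ln R) (f x) = (f x)^-1); last exact: derive_val.
rewrite derive1E D_line x0v.
by rewrite mulrAC mulVf ?mul1r // gt_eqF.
Qed.
Section marg.
Context {dZ : measure_display} {Z : measurableType dZ} (Q : probability Z R)
  (qc : V -> Z -> R).
Hypothesis qc_int : forall x, Q.-integrable setT (fun z => (qc x z)%:E).
Hypothesis qc_der : forall x z i, derivable (qc ^~ z) x (ei i).
Hypothesis qc_dom : forall x i, exists G : Z -> R, Q.-integrable setT (EFin \o G) /\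
     exists2 r : R, 0 < r & forall t z, `|t| < r ->
       `|'D_(ei i) (qc ^~ z) (x + t *: ei i)| <= G z.

Lemma marg_derive y i :
  derivable (marginal Q qc) y (ei i) /\
  'D_(ei i) (marginal Q qc) y = \int[Q]_z 'D_(ei i) (qc ^~ z) y.
Proof.
have [G [iG [r r0 HG]]] := qc_dom y i.
pose f (t : R) (z : Z) := qc (y + t *: ei i) z.
have I0 : `]-r, r[%classic (0:R) by rewrite /= in_itv /= oppr_lt0 r0.
have intf : forall x, `]-r, r[%classic x -> Q.-integrable setT (EFin \o f x).
  by move=> x _; exact: qc_int.
have derf1 : forall x z, `]-r, r[%classic x -> setT z -> derivable (f ^~ z) x 1.
  by move=> x z _ _; apply/(derivable_line (qc ^~ z)).
have G0 : forall z, 0 <= G z.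
  move=> z; have := HG 0 z; rewrite normr0 => /(_ r0); apply: le_trans.
  exact: normr_ge0.
have Gub : forall x z, `]-r, r[%classic x -> setT z -> `|partial1of2 f x z| <= G z.
  move=> x z /=; rewrite in_itv /= => /andP[h1 h2] _.
  rewrite partial1of2E (D_line (qc ^~ z)); apply: HG.
  by rewrite ltr_norml h1 h2.
have := @differentiation_under_integral R _ Z Q f setT measurableT 0 (-r) r I0 intf derf1 G G0 iG Gub.
have := @derivable_under_integral R _ Z Q f setT measurableT 0 (-r) r I0 intf derf1 G G0 iG Gub.
move=> D1 D2; split.
  by have := (derivable_line (marginal Q qc) y (ei i) 0).1 D1; rewrite x0v.
have E := D_line (marginal Q qc) y (ei i) 0; rewrite x0v in E.
rewrite -E -derive1E.
apply: etrans D2 _.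
apply: eq_Rintegral => z _.
by rewrite partial1of2E (D_line (qc ^~ z)) x0v.
Qed.
End marg.

Lemma prob_int_gt0 {dZ : measure_display} {Z : measurableType dZ} (Q : probability Z R)
  (f : Z -> R) : (forall z, 0 < f z) -> Q.-integrable setT (fun z => (f z)%:E) ->
  0 < \int[Q]_z f z.
Proof.
move=> f0 fi.
have mf : measurable_fun setT (fun z => (f z)%:E) by exact: (measurable_int Q fi).
have ge0 : (0 <= \int[Q]_z (f z)%:E)%E by apply: integral_ge0 => z _; rewrite lee_fin ltW.
have fin : (\int[Q]_z (f z)%:E)%E \is a fin_num by apply: integrable_fin_num.
rewrite lt0r; apply/andP; split; last first.
  by rewrite /Rintegral -lee_fin fineK.
apply/eqP => H.
have H0 : (\int[Q]_z `|(f z)%:E| = 0)%E.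
  rewrite /Rintegral in H.
  transitivity (\int[Q]_z (f z)%:E)%E.
    by apply: eq_integral => z _; rewrite gee0_abs // lee_fin ltW.
  by rewrite -(fineK fin) H.
have [N [mN QN sub]] := (ae_eq_integral_abs Q measurableT mf).1 H0.
have : Q setT = 0%E.
  apply/eqP; rewrite -measure_le0 -QN; apply: le_measure; rewrite ?inE //.
  move=> z _; apply: sub => /(_ I) /= /eqP; rewrite eqe gt_eqF //.
by rewrite probability_setT => /eqP; rewrite onee_eq0.
Qed.

Lemma D_seq (f : V -> R) (a v : V) : derivable f a v ->
  (fun n => (harmonic n)^-1 * (f (harmonic n *: v + a) - f a)) @ \oo --> 'D_v f a.
Proof.
move=> df.
have H : (fun h : R => h^-1 * (f (h *: v + a) - f a)) @ 0^' --> 'D_v f a := df.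
apply: ((cvgr_dnbhsP (fun h : R => h^-1 * (f (h *: v + a) - f a)) 0 ('D_v f a)).1 H harmonic).
split; last exact: cvg_harmonic.
by move=> n; rewrite gt_eqF // harmonic_gt0.
Qed.

Lemma D_meas {dZ : measure_display} {Z : measurableType dZ} (qc : V -> Z -> R) (y v : V) :
  (forall x, measurable_fun setT (qc x)) -> (forall z, derivable (qc ^~ z) y v) ->
  measurable_fun setT (fun z => 'D_v (qc ^~ z) y).
Proof.
move=> mq dq.
apply: (measurable_fun_cvg (h := fun n z => (harmonic n)^-1 * (qc (harmonic n *: v + y) z - qc y z))).
  move=> n; apply: measurable_funM => //; apply: measurable_funB; exact: mq.
by move=> z _; exact: (D_seq (qc ^~ z) y v (dq z)).
Qed.

Lemma fubR {d1 d2} {T1 : measurableType d1} {T2 : measurableType d2}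
  (m1 : {sigma_finite_measure set T1 -> \bar R})
  (m2 : {sigma_finite_measure set T2 -> \bar R}) (f : T1 * T2 -> R) (h : T1 -> R) :
  (m1 \x m2)%E.-integrable setT (fun w => (f w)%:E) ->
  (forall x, (\int[m2]_y (f (x, y))%:E)%E = (h x)%:E) ->
  m1.-integrable setT (fun x => (h x)%:E) /\
  (\int[m1 \x m2]_w (f w)%:E = \int[m1]_x (h x)%:E)%E.
Proof.
move=> fi hE; split.
  apply: (eq_integrable measurableT _ _ _ (integrable_fubini_F fi)) => x _.
  by rewrite /fubini_F hE.
rewrite -integral12_prod_meas1 //; apply: eq_integral => x _.
by rewrite /fubini_F hE.
Qed.
End S.
Section S.
Context {R : realType} {d : nat}.
Local Notation V := 'rV[R]_d.

Lemma mxBE (A B : V) i : (A - B) ord0 i = A ord0 i - B ord0 i.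
Proof. by rewrite !mxE. Qed.

Section main.
Context (dZ : measure_display) (Z : measurableType dZ) (Q : probability Z R)
  (leb : {sigma_finite_measure set 'rV[R]_d -> \bar R})
  (qc : 'rV[R]_d -> Z -> R) (p : 'rV[R]_d -> R)
  (k : 'rV[R]_d -> 'rV[R]_d -> R).
Hypothesis qc_pos : forall x z, 0 < qc x z.
Hypothesis qc_meas : measurable_fun setT (fun w : 'rV[R]_d * Z => qc w.1 w.2).
Hypothesis qc_der : forall x z i, derivable (qc ^~ z) x (ei i).
Hypothesis qc_int : forall x, Q.-integrable setT (fun z => (qc x z)%:E).
Hypothesis qc_dom : forall x i, exists G : Z -> R, Q.-integrable setT (EFin \o G) /\
     exists2 r : R, 0 < r & forall t z, `|t| < r ->
       `|'D_(ei i) (qc ^~ z) (x + t *: ei i)| <= G z.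
Hypothesis p_pos : forall x, 0 < p x.
Hypothesis p_der : forall x i, derivable p x (ei i).
Let q := marginal Q qc.
Let u := fun (y : 'rV[R]_d) (z : Z) => score p y - score (qc ^~ z) y.
Hypothesis H1 : forall x i, leb.-integrable setT
     (fun y => (k x y * score p y ord0 i * q y)%:E).
Hypothesis H2 : forall x i, (leb \x Q)%E.-integrable setT
     (fun w => (k x w.1 * score (qc ^~ w.2) w.1 ord0 i * qc w.1 w.2)%:E).
Hypothesis H3 : forall i, (((leb \x Q) \x leb) \x Q)%E.-integrable setT
     (fun w => (k w.1.1.1 w.1.2 * u w.1.1.1 w.1.1.2 ord0 i * u w.1.2 w.2 ord0 i
                 * qc w.1.1.1 w.1.1.2 * qc w.1.2 w.2)%:E).

Let qsec x : measurable_fun setT (qc x).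
Proof. exact: (measurable_fun_pair2 x qc_meas). Qed.

Let qpos y : 0 < q y.
Proof. exact: prob_int_gt0. Qed.

Let Dq y i : 'D_(ei i) q y = \int[Q]_z 'D_(ei i) (qc ^~ z) y.
Proof. exact: (marg_derive Q qc qc_int qc_der qc_dom y i).2. Qed.

Let dq y i : derivable q y (ei i).
Proof. exact: (marg_derive Q qc qc_int qc_der qc_dom y i).1. Qed.

Let Dqc_int y i : Q.-integrable setT (fun z => ('D_(ei i) (qc ^~ z) y)%:E).
Proof.
have [G [iG [r r0 HG]]] := qc_dom y i.
apply: (le_integrable measurableT _ _ iG).
  by apply/measurable_EFinP; apply: D_meas => // z; exact: qc_der.
move=> z _ /=; rewrite lee_fin.
have := HG 0 z; rewrite normr0 x0v => /(_ r0) h.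
by apply: le_trans h _; exact: ler_norm.
Qed.

Let sq y i : score q y ord0 i * q y = 'D_(ei i) q y.
Proof. exact: score_mul. Qed.

Let sqc y z i : score (qc ^~ z) y ord0 i * qc y z = 'D_(ei i) (qc ^~ z) y.
Proof. exact: score_mul. Qed.

Let g i y := (score p y - score q y) ord0 i * q y.
Let w i y z := u y z ord0 i * qc y z.

Let wE i y z : w i y z = score p y ord0 i * qc y z - 'D_(ei i) (qc ^~ z) y.
Proof.
rewrite /w.
have -> : u y z ord0 i = score p y ord0 i - score (qc ^~ z) y ord0 i by rewrite /u mxBE.
by rewrite -(sqc y z i) mulrBl.
Qed.

Let qE y : (\int[Q]_z (qc y z)%:E)%E = (q y)%:E.
Proof. by rewrite /q /marginal /Rintegral fineK //; exact: integrable_fin_num. Qed.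

Let DqE y i : (\int[Q]_z ('D_(ei i) (qc ^~ z) y)%:E)%E = ('D_(ei i) q y)%:E.
Proof. by rewrite Dq /Rintegral fineK //; exact: integrable_fin_num. Qed.

Let w_int i y : Q.-integrable setT (fun z => (w i y z)%:E).
Proof.
apply: (eq_integrable measurableT (fun z => (score p y ord0 i)%:E * (qc y z)%:E - ('D_(ei i) (qc ^~ z) y)%:E)%E).
  by move=> z _; rewrite wE EFinB EFinM.
apply: integrableB => //; exact: integrableZl.
Qed.

Let w_g i y : (\int[Q]_z (w i y z)%:E)%E = (g i y)%:E.
Proof.
under eq_integral do rewrite wE EFinB EFinM.
rewrite (integralB measurableT); last 2 first.
  exact: integrableZl.
  exact: Dqc_int.
rewrite integralZl // qE DqE -EFinM -EFinB /g -sq.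
have -> : (score p y - score q y) ord0 i = score p y ord0 i - score q y ord0 i by rewrite mxBE.
congr EFin; ring.
Qed.

Let qmeas : measurable_fun setT q.
Proof.
apply/measurable_EFinP.
have mf : measurable_fun setT (fun w : V * Z => (qc w.1 w.2)%:E).
  exact/measurable_EFinP.
have f0 : forall v : V * Z, (0 <= (qc v.1 v.2)%:E)%E by move=> v; rewrite lee_fin ltW.
have := measurable_fun_fubini_tonelli_F (m2 := Q) _ mf f0.
apply: eq_measurable_fun => y _.
by rewrite /fubini_F /= qE.
Qed.

Let qinv_meas : measurable_fun setT (fun y => (q y)^-1).
Proof.
apply: (eq_measurable_fun (fun y => expR (- ln (q y)))).
  by move=> y _; rewrite expRN lnK // posrE.
apply: measurableT_comp; first exact: measurable_expR.
apply: measurable_funN; apply: measurableT_comp => //; exact: measurable_ln.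
Qed.

Let A_int x i : (leb \x Q)%E.-integrable setT
  (fun w => (k x w.1 * score p w.1 ord0 i * qc w.1 w.2)%:E).
Proof.
have m1 : measurable_fun setT (fun y => k x y * score p y ord0 i * q y).
  by apply/measurable_EFinP; exact: (measurable_int leb (H1 x i)).
have mA : measurable_fun setT (fun w : V * Z => (k x w.1 * score p w.1 ord0 i * qc w.1 w.2)%:E).
  apply/measurable_EFinP.
  apply: (eq_measurable_fun (fun w : V * Z => (k x w.1 * score p w.1 ord0 i * q w.1) * ((q w.1)^-1 * qc w.1 w.2))).
    by move=> v _; field; rewrite gt_eqF.
  apply: measurable_funM; first exact: measurableT_comp m1 measurable_fst.
  apply: measurable_funM => //; exact: measurableT_comp qinv_meas measurable_fst.
apply/(integrable12ltyP leb Q mA).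
have := (integrableP _ _ _ (H1 x i)).2.
apply: le_lt_trans; rewrite le_eqVlt; apply/orP; left; apply/eqP.
apply: eq_integral => y _ /=.
transitivity (\int[Q]_z ((`|k x y * score p y ord0 i|)%:E * (qc y z)%:E))%E.
  by apply: eq_integral => z _; rewrite -EFinM normrM (gtr0_norm (qc_pos y z)).
rewrite integralZl // qE -EFinM [in RHS]normrM (gtr0_norm (qpos y)).
by [].
Qed.

Let P1 x i : leb.-integrable setT (fun y => (k x y * g i y)%:E) /\
  (\int[(leb \x Q)]_w (k x w.1 * u w.1 w.2 ord0 i * qc w.1 w.2)%:E
     = \int[leb]_y (k x y * g i y)%:E)%E.
Proof.
have fi : (leb \x Q)%E.-integrable setT
    (fun w => (k x w.1 * u w.1 w.2 ord0 i * qc w.1 w.2)%:E).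
  apply: (eq_integrable measurableT _ _ _ (integrableB measurableT (A_int x i) (H2 x i))).
  move=> v _ /=; rewrite -EFinB /u mxBE; congr EFin; ring.
apply: (fubR leb Q (fun v : V * Z => k x v.1 * u v.1 v.2 ord0 i * qc v.1 v.2) (fun y => k x y * g i y) fi) => y.
transitivity (\int[Q]_z ((k x y)%:E * (w i y z)%:E))%E.
  by apply: eq_integral => z _ /=; rewrite -EFinM /w mulrA.
by rewrite integralZl // w_g -EFinM.
Qed.

Let part1 x : fstar leb k p q x =
  \row_(i < d) \int[(leb \x Q)%E]_v (k x v.1 * u v.1 v.2 ord0 i * qc v.1 v.2).
Proof.
apply/rowP => i; rewrite !mxE /Rintegral (P1 x i).2; congr fine.
by apply: eq_integral => y _; rewrite /g mulrA.
Qed.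

Let K i x := \int[leb]_y (k x y * g i y).

Let KE i x : (\int[leb]_y (k x y * g i y)%:E)%E = (K i x)%:E.
Proof. by rewrite /K /Rintegral fineK //; exact: integrable_fin_num (P1 x i).1. Qed.

Let F i (v : ((V * Z) * V) * Z) := k v.1.1.1 v.1.2 * u v.1.1.1 v.1.1.2 ord0 i * u v.1.2 v.2 ord0 i
                 * qc v.1.1.1 v.1.1.2 * qc v.1.2 v.2.
Let Hf i (v : (V * Z) * V) := k v.1.1 v.2 * w i v.1.1 v.1.2 * g i v.2.

Let Sa i : ((leb \x Q) \x leb)%E.-integrable setT (fun v => (Hf i v)%:E) /\
  (\int[(((leb \x Q) \x leb) \x Q)%E]_v (F i v)%:E = \int[((leb \x Q) \x leb)%E]_v (Hf i v)%:E)%E.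
Proof.
apply: (fubR (PM (PM leb Q) leb) Q (F i) (Hf i) (H3 i)) => v.
transitivity (\int[Q]_z ((k v.1.1 v.2 * w i v.1.1 v.1.2)%:E * (w i v.2 z)%:E))%E.
  by apply: eq_integral => z _ /=; rewrite -EFinM /F /w; congr EFin; ring.
by rewrite integralZl // w_g -EFinM.
Qed.

Let Sb i : (leb \x Q)%E.-integrable setT (fun v => (w i v.1 v.2 * K i v.1)%:E) /\
  (\int[((leb \x Q) \x leb)%E]_v (Hf i v)%:E = \int[(leb \x Q)%E]_v (w i v.1 v.2 * K i v.1)%:E)%E.
Proof.
apply: (fubR (PM leb Q) leb (Hf i) (fun v => w i v.1 v.2 * K i v.1) (Sa i).1) => v.
transitivity (\int[leb]_y ((w i v.1 v.2)%:E * (k v.1 y * g i y)%:E))%E.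
  by apply: eq_integral => y _ /=; rewrite -EFinM /Hf; congr EFin; ring.
by rewrite integralZl ?KE -?EFinM //; exact: (P1 v.1 i).1.
Qed.

Let Sc i : leb.-integrable setT (fun x => (g i x * K i x)%:E) /\
  (\int[(leb \x Q)%E]_v (w i v.1 v.2 * K i v.1)%:E = \int[leb]_x (g i x * K i x)%:E)%E.
Proof.
apply: (fubR leb Q (fun v => w i v.1 v.2 * K i v.1) (fun x => g i x * K i x) (Sb i).1) => x.
transitivity (\int[Q]_z ((w i x z)%:E * (K i x)%:E))%E.
  by apply: eq_integral => z _ /=; rewrite -EFinM.
by rewrite integralZr // w_g -EFinM.
Qed.

Let L i (v : V * V) := k v.1 v.2 * g i v.1 * g i v.2.

Let H'int i : (PM (PM leb leb) Q).-integrable setT (fun v : (V * V) * Z => (Hf i ((v.1.1, v.2), v.1.2))%:E).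
Proof.
have mHf : measurable_fun setT (fun v => (Hf i v)%:E) := measurable_int _ (Sa i).1.
have msig : measurable_fun setT (fun v : (V * V) * Z => ((v.1.1, v.2), v.1.2)).
  apply: measurable_fun_pair; last exact: measurableT_comp measurable_snd measurable_fst.
  apply: measurable_fun_pair => //.
  exact: measurableT_comp measurable_fst measurable_fst.
have mH' : measurable_fun setT (fun v : (V * V) * Z => (Hf i ((v.1.1, v.2), v.1.2))%:E).
  exact: (measurableT_comp mHf msig).
apply/(integrable12ltyP (PM leb leb) Q mH').
pose A := fun v : (V * Z) * V => `|(Hf i v)%:E|%E.
have mA : measurable_fun setT A.
  exact: (measurableT_comp (@abse_measurable R setT) mHf).
have A0 : forall v, (0 <= A v)%E by move=> v; exact: abse_ge0.
have hHf := (integrableP _ _ _ (Sa i).1).2.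
pose Psi := fubini_F leb A.
have mPsi : measurable_fun setT Psi := measurable_fun_fubini_tonelli_F _ mA A0.
have Psi0 : forall v, (0 <= Psi v)%E by move=> v; apply: integral_ge0 => ? _; exact: A0.
have E1 : (\int[PM (PM leb Q) leb]_v A v =
    \int[leb]_x \int[Q]_z \int[leb]_x' A ((x, z), x'))%E.
  rewrite (fubini_tonelli1 (m1 := PM leb Q) (m2 := leb) A mA A0).
  by rewrite (fubini_tonelli1 (m1 := leb) (m2 := Q) Psi mPsi Psi0).
pose Phi := fun v : V * V => (\int[Q]_z `|(Hf i ((v.1, z), v.2))%:E|)%E.
have mPhi : measurable_fun setT Phi.
  apply: (measurable_fun_fubini_tonelli_F (m2 := Q) (fun v : (V * V) * Z => `|(Hf i ((v.1.1, v.2), v.1.2))%:E|%E)).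
    exact: (measurableT_comp (@abse_measurable R setT) mH').
  by move=> v; exact: abse_ge0.
have Phi0 : forall v, (0 <= Phi v)%E by move=> v; apply: integral_ge0 => ? _; exact: abse_ge0.
have E2 : (\int[PM leb leb]_v Phi v = \int[leb]_x \int[leb]_x' \int[Q]_z A ((x, z), x'))%E.
  by rewrite (fubini_tonelli1 (m1 := leb) (m2 := leb) Phi mPhi Phi0).
have E3 : (\int[leb]_x \int[leb]_x' \int[Q]_z A ((x, z), x') =
    \int[leb]_x \int[Q]_z \int[leb]_x' A ((x, z), x'))%E.
  apply: eq_integral => x _.
  have mx : measurable_fun setT (fun v : V * Z => A ((x, v.2), v.1)).
    apply: (measurableT_comp mA); apply: measurable_fun_pair => //.
    by apply: measurable_fun_pair => //.
  exact: (fubini_tonelli (m1 := leb) (m2 := Q) (fun v : V * Z => A ((x, v.2), v.1)) mx (fun v => A0 _)).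
have -> : (\int[PM leb leb]_x \int[Q]_y `|(Hf i ((x, y).1.1, (x, y).2, (x, y).1.2))%:E| =
    \int[PM leb leb]_v Phi v)%E by [].
by rewrite E2 E3 -E1.
Qed.

Let Sd i : (leb \x leb)%E.-integrable setT (fun v => (L i v)%:E) /\
  (\int[(leb \x leb)%E]_v (L i v)%:E = \int[leb]_x (g i x * K i x)%:E)%E.
Proof.
have HH : forall v : V * V, (\int[Q]_z (Hf i ((v, z).1.1, (v, z).2, (v, z).1.2))%:E)%E = (L i v)%:E.
  move=> v.
  transitivity (\int[Q]_z ((w i v.1 z)%:E * (k v.1 v.2 * g i v.2)%:E))%E.
    by apply: eq_integral => z _ /=; rewrite -EFinM /Hf; congr EFin; ring.
  by rewrite integralZr // w_g -EFinM /L; congr EFin; ring.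
have Lint := (fubR (PM leb leb) Q (fun v : (V * V) * Z => Hf i ((v.1.1, v.2), v.1.2)) (L i) (H'int i) HH).1.
split; first exact: Lint.
have HH2 : forall x, (\int[leb]_y (L i (x, y))%:E)%E = (g i x * K i x)%:E.
  move=> x.
  transitivity (\int[leb]_y ((g i x)%:E * (k x y * g i y)%:E))%E.
    by apply: eq_integral => y _ /=; rewrite -EFinM /L; congr EFin; ring.
  by rewrite integralZl ?KE -?EFinM //; exact: (P1 x i).1.
exact: (fubR leb leb (L i) (fun x => g i x * K i x) Lint HH2).2.
Qed.

Let part2 : KSD2 leb k p q =
  \int[(((leb \x Q) \x leb) \x Q)%E]_v
    (k v.1.1.1 v.1.2 * dotv (u v.1.1.1 v.1.1.2) (u v.1.2 v.2)
       * qc v.1.1.1 v.1.1.2 * qc v.1.2 v.2).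
Proof.
rewrite /KSD2 /Rintegral; congr fine.
transitivity (\int[(leb \x leb)%E]_v (\sum_(i < d) (L i v)%:E))%E.
  apply: eq_integral => v _; rewrite sumEFin; congr EFin.
  rewrite /dotv mulr_sumr !mulr_suml; apply: eq_bigr => i _.
  by rewrite /L /g -!mulrA; congr (_ * (_ * _)); exact: mulrCA.
transitivity (\int[(((leb \x Q) \x leb) \x Q)%E]_v (\sum_(i < d) (F i v)%:E))%E; last first.
  apply: eq_integral => v _; rewrite sumEFin; congr EFin.
  rewrite /dotv mulr_sumr !mulr_suml; apply: eq_bigr => i _.
  by rewrite /F -!mulrA.
rewrite (integral_sum measurableT (fun i => (Sd i).1)).
rewrite (integral_sum measurableT H3).
apply: eq_bigr => i _.
rewrite (Sd i).2 -(Sc i).2 -(Sb i).2 -(Sa i).2.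
by [].
Qed.

Lemma main_res : (forall x, fstar leb k p q x =
     \row_(i < d) \int[(leb \x Q)%E]_w (k x w.1 * u w.1 w.2 ord0 i * qc w.1 w.2))
  /\
  KSD2 leb k p q =
     \int[(((leb \x Q) \x leb) \x Q)%E]_w
        (k w.1.1.1 w.1.2 * dotv (u w.1.1.1 w.1.1.2) (u w.1.2 w.2)
           * qc w.1.1.1 w.1.1.2 * qc w.1.2 w.2).
Proof. split; [exact: part1 | exact: part2]. Qed.

End main.
End S.

Theorem proposition1 (R : realType) (d : nat)
  (dZ : measure_display) (Z : measurableType dZ) (Q : probability Z R)
  (leb : {sigma_finite_measure set 'rV[R]_d -> \bar R})
  (qc : 'rV[R]_d -> Z -> R) (p : 'rV[R]_d -> R)
  (k : 'rV[R]_d -> 'rV[R]_d -> R) :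
  (* leb is the Lebesgue measure on R^d *)
  is_lebesgue leb ->
  (* q_phi(.|z) : a positive, differentiable probability density for every z *)
  (forall x z, 0 < qc x z) ->
  measurable_fun setT (fun w : 'rV[R]_d * Z => qc w.1 w.2) ->
  (forall z, (\int[leb]_x (qc x z)%:E = 1)%E) ->
  (forall x z i, derivable (qc ^~ z) x (ei i)) ->
  (* q_phi(x) = \int q_phi(x|z) q(dz) is finite, and differentiation under
     the integral sign is justified by local domination of the derivative *)
  (forall x, Q.-integrable setT (fun z => (qc x z)%:E)) ->
  (forall x i, exists G : Z -> R, Q.-integrable setT (EFin \o G) /\
     exists2 r : R, 0 < r & forall t z, `|t| < r ->
       `|'D_(ei i) (qc ^~ z) (x + t *: ei i)| <= G z) ->
  (* target density p: positive, with partial derivatives *)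
  (forall x, 0 < p x) ->
  (forall x i, derivable p x (ei i)) ->
  (* continuous positive semi-definite kernel *)
  psd_kernel k ->
  continuous (fun w : 'rV[R]_d * 'rV[R]_d => k w.1 w.2) ->
  let q := marginal Q qc in
  let u := fun (y : 'rV[R]_d) (z : Z) => score p y - score (qc ^~ z) y in
  (* the expectations involved exist (are absolutely convergent) *)
  (forall x i, leb.-integrable setT
     (fun y => (k x y * score p y ord0 i * q y)%:E)) ->
  (forall x i, (leb \x Q)%E.-integrable setT
     (fun w => (k x w.1 * score (qc ^~ w.2) w.1 ord0 i * qc w.1 w.2)%:E)) ->
  (forall i, (((leb \x Q) \x leb) \x Q)%E.-integrable setT
     (fun w => (k w.1.1.1 w.1.2 * u w.1.1.1 w.1.1.2 ord0 i * u w.1.2 w.2 ord0 i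
                 * qc w.1.1.1 w.1.1.2 * qc w.1.2 w.2)%:E)) ->
  (forall x, fstar leb k p q x =
     \row_(i < d) \int[(leb \x Q)%E]_w (k x w.1 * u w.1 w.2 ord0 i * qc w.1 w.2))
  /\
  KSD2 leb k p q =
     \int[(((leb \x Q) \x leb) \x Q)%E]_w
        (k w.1.1.1 w.1.2 * dotv (u w.1.1.1 w.1.1.2) (u w.1.2 w.2)
           * qc w.1.1.1 w.1.1.2 * qc w.1.2 w.2).
Proof.
move=> hleb qc_pos qc_meas qc_norm qc_der qc_int qc_dom p_pos p_der kpsd kcont q u H1 H2 H3.
by apply: main_res.
Qed.
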